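(* In the nonrepetitive game over any symbol set, suppose that whenever it is Ann's turn and the current sequence is $s_1,\ldots,s_{m-1}$ (so $m$ is odd), Ann chooses a symbol $s_m$ not excluded by the following rules: (i) $s_{m-2}$ is excluded; (ii) if $s_{m-1}=s_{m-4}$, then $s_{m-3}$ is excluded; (iii) if only one symbol has been excluded by rules (i) and (ii), then $s_{m-4}$ is also excluded (rules referring to nonexistent terms are ignored). Then, regardless of Ben's moves, the sequence built never contains a repetition of size $2$, $3$ or $4$.
   Context: A repetition of size $h\geq1$ in a sequence is a block of consecutive terms of the form $x_1\ldots x_h x_1\ldots x_h$. In the nonrepetitive game Ann and Ben alternately (Ann first) append symbols from a symbol set to a sequence, nothing ever being erased; thus Ann chooses the terms with odd indices $s_1,s_3,\ldots$ and Ben those with even indices. *)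

(* Defs.v *)
(* The sequence is s : nat -> T, with terms s 1, s 2, ... (1-indexed);
   only the terms s 1 .. s n of a finite play are relevant. *)
From Stdlib Require Import Arith Lia.

(* Rule (i): s_{m-2} is excluded (only if the term exists, i.e. m-2 >= 1). *)
Definition excl_i {T : Type} (s : nat -> T) (m : nat) (x : T) : Prop :=
  3 <= m /\ x = s (m - 2).

Definition excl_ii {T : Type} (s : nat -> T) (m : nat) (x : T) : Prop :=
  5 <= m /\ s (m - 1) = s (m - 4) /\ x = s (m - 3).

Definition only_one_excluded {T : Type} (s : nat -> T) (m : nat) : Prop :=
  exists y : T, forall x : T, (excl_i s m x \/ excl_ii s m x) <-> x = y.

Definition excl_iii {T : Type} (s : nat -> T) (m : nat) (x : T) : Prop :=
  only_one_excluded s m /\ 5 <= m /\ x = s (m - 4).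

Definition excluded {T : Type} (s : nat -> T) (m : nat) (x : T) : Prop :=
  excl_i s m x \/ excl_ii s m x \/ excl_iii s m x.

Definition ann_follows_strategy {T : Type} (s : nat -> T) (n : nat) : Prop :=
  forall m : nat, 1 <= m <= n -> Nat.Odd m -> ~ excluded s m (s m).

Definition has_repetition {T : Type} (s : nat -> T) (n h : nat) : Prop :=
  exists i : nat, 1 <= i /\ i + 2 * h - 1 <= n /\
    forall j : nat, j < h -> s (i + j) = s (i + h + j).

(* Main.v *)
Require Import Defs.
From Stdlib Require Import Arith Lia Classical.

Section S.
Context {T : Type} (s : nat -> T) (n : nat) (H : ann_follows_strategy s n).

Lemma L1 k : 1 <= k -> Nat.Odd (k+2) -> k+2 <= n -> s (k+2) = s k -> False.
Proof.
  intros Hk Ho Hn E. apply (H (k+2)); [lia|exact Ho|].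
  left. split; [lia|]. replace (k+2-2) with k by lia. exact E.
Qed.

Lemma L2 k : 1 <= k -> Nat.Odd (k+4) -> k+4 <= n ->
  s (k+3) = s k -> s (k+4) = s (k+1) -> False.
Proof.
  intros Hk Ho Hn E1 E2. apply (H (k+4)); [lia|exact Ho|].
  right; left. unfold excl_ii. replace (k+4-1) with (k+3) by lia. replace (k+4-4) with k by lia.
  replace (k+4-3) with (k+1) by lia. split; [lia|]. split; [exact E1|]. exact E2.
Qed.

Lemma L3 k : 1 <= k -> Nat.Odd (k+4) -> k+4 <= n ->
  (s (k+3) = s k -> s (k+1) = s (k+2)) -> s (k+4) = s k -> False.
Proof.
  intros Hk Ho Hn C E. apply (H (k+4)); [lia|exact Ho|].
  right; right. split; [|split; [lia|]].
  - exists (s (k+2)). intros x. unfold excl_i, excl_ii.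
    replace (k+4-1) with (k+3) by lia. replace (k+4-4) with k by lia.
    replace (k+4-3) with (k+1) by lia. replace (k+4-2) with (k+2) by lia.
    split.
    + intros [[_ Hx]|[_ [E1 Hx]]]; subst; auto.
    + intros ->. left. split; [lia|reflexivity].
  - replace (k+4-4) with k by lia. exact E.
Qed.
End S.

Ltac use Hr i h j := match type of Hr with forall _, _ -> ?s _ = _ => idtac end; let s := match type of Hr with forall _, _ -> ?s _ = _ => s end in
  first
  [ transitivity (s (i+j)); [f_equal; lia|];
    transitivity (s (i+h+j)); [apply Hr; lia | f_equal; lia]
  | transitivity (s (i+h+j)); [f_equal; lia|];
    transitivity (s (i+j)); [symmetry; apply Hr; lia | f_equal; lia] ].

Theorem mainTheorem6 (T : Type) (s : nat -> T) (n : nat) :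
  ann_follows_strategy s n ->
  forall h : nat, 2 <= h <= 4 -> ~ has_repetition s n h.
Proof.
  intros H h Hh [i [Hi [Hn Hr]]].
  destruct (Nat.Even_or_Odd i) as [[p Hp]|[p Hp]];
  (assert (Hc : h = 2 \/ h = 3 \/ h = 4) by lia; destruct Hc as [ -> | [ -> | -> ] ]).
  - apply (L1 s n H (i+1)); [lia|exists (p+1); lia|lia|]. use Hr i 2 1.
  - apply (L2 s n H (i+1)); [lia|exists (p+2); lia|lia| use Hr i 3 1 | use Hr i 3 2].
  - destruct (classic (s (i+2) = s (i+3))) as [C|C].
    + apply (L3 s n H (i+1)); [lia|exists (p+2); lia|lia| |use Hr i 4 1].
      intros _. replace (i+1+1) with (i+2) by lia.
      replace (i+1+2) with (i+3) by lia. exact C.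
    + apply (L3 s n H (i+3)); [lia|exists (p+3); lia|lia| |use Hr i 4 3].
      intros E. exfalso. apply C. rewrite <- E. use Hr i 4 2.
  - apply (L1 s n H i); [lia|exists (p+1); lia|lia|]. use Hr i 2 0.
  - apply (L2 s n H i); [lia|exists (p+2); lia|lia| use Hr i 3 0 | use Hr i 3 1].
  - destruct (classic (s (i+1) = s (i+2))) as [C|C].
    + apply (L3 s n H i); [lia|exists (p+2); lia|lia| |use Hr i 4 0].
      intros _. exact C.
    + apply (L3 s n H (i+2)); [lia|exists (p+3); lia|lia| |use Hr i 4 2].
      intros E. exfalso. apply C. rewrite <- E. use Hr i 4 1.
Qed.
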